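(* For every integer $n>1$, $\mathrm{DE3}(n+2)+\mathrm{DE3}(n-1)$ equals the number of partitions of $n$ into parts none of which is divisible by $4$.
   Context: For a nonnegative integer $n$, $\mathrm{DE3}(n)$ denotes the number of partitions of $n$ in which no even part is repeated, and the largest part is odd and appears exactly once (so $\mathrm{DE3}(0)=0$). Equivalently, $\sum_{n\ge0}\mathrm{DE3}(n)q^n=\sum_{n\ge0}\frac{(-q^2;q^2)_n q^{2n+1}}{(q;q^2)_{n}}$, where $(a;q)_0=1$ and $(a;q)_n=\prod_{j=0}^{n-1}(1-aq^j)$. *)

(* Defs.v *)
(* Integer partitions represented as nonincreasing sequences
   of positive naturals. *)
From mathcomp Require Import all_boot.
Set Implicit Arguments. Unset Strict Implicit. Unset Printing Implicit Defensive.

Fixpoint seqs_upto (k : nat) (A : seq nat) : seq (seq nat) :=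
  match k with
  | 0 => [:: [::]]
  | k'.+1 => [::] :: [seq x :: s | x <- A, s <- seqs_upto k' A]
  end.

Definition is_partition (n : nat) (s : seq nat) : bool :=
  [&& all (fun x => 0 < x) s, sorted geq s & sumn s == n].

(* The (duplicate-free) list of all partitions of n: every partition of n has
   at most n parts, each in 1..n. *)
Definition partitions (n : nat) : seq (seq nat) :=
  undup [seq s <- seqs_upto n (iota 1 n) | is_partition n s].

Definition de3_cond (s : seq nat) : bool :=
  [&& all (fun x => ~~ odd x ==> (count_mem x s <= 1)) s,
      s != [::],
      odd (head 0 s) & count_mem (head 0 s) s == 1].

Definition DE3 (n : nat) : nat := count de3_cond (partitions n).

Definition p_no4 (n : nat) : nat :=
  count (fun s => all (fun x => ~~ (4 %| x)) s) (partitions n).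

Example DE3_0 : DE3 0 = 0. Proof. by []. Qed.
Example chk : DE3 5 + DE3 2 = p_no4 3. Proof. by vm_compute. Qed.
Example chk2 : DE3 6 + DE3 3 = p_no4 4. Proof. by vm_compute. Qed.

(* Main.v *)
Require Import Defs.
From mathcomp Require Import all_boot zify.
Set Implicit Arguments. Unset Strict Implicit. Unset Printing Implicit Defensive.

Lemma seqs_upto_mem k A s : size s <= k -> all (fun x => x \in A) s -> s \in seqs_upto k A.
Proof.
elim: k s => [|k IH] [|x s] //= Hs /andP[xA sA].
rewrite inE; apply/orP; right.
by apply: (allpairs_f (fun x s => x :: s)) => //; apply: IH.
Qed.

Lemma size_le_sumn s : all (fun x => 0 < x) s -> size s <= sumn s.
Proof. elim: s => //= x s IH /andP[Hx Hs]; have := IH Hs; lia. Qed.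

Lemma le_sumn s x : x \in s -> x <= sumn s.
Proof. elim: s => //= y s IH; rewrite inE => /orP[/eqP->|/IH]; lia. Qed.

Lemma mem_partitions m s : (s \in partitions m) = is_partition m s.
Proof.
rewrite /partitions mem_undup mem_filter.
case Hp: (is_partition m s) => //=.
move: Hp => /and3P[Hpos Hsort /eqP Hsum].
apply: seqs_upto_mem; first by rewrite -Hsum size_le_sumn.
apply/allP => x xs; rewrite mem_iota.
have := le_sumn xs; have := allP Hpos x xs; lia.
Qed.

Lemma uniq_partitions m : uniq (partitions m).
Proof. exact: undup_uniq. Qed.

Lemma count_bij (l1 l2 : seq (seq nat)) (P Q : pred (seq nat)) f g :
  uniq l1 -> uniq l2 ->
  (forall x, x \in l1 -> P x -> [/\ f x \in l2, Q (f x) & g (f x) = x]) ->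
  (forall y, y \in l2 -> Q y -> [/\ g y \in l1, P (g y) & f (g y) = y]) ->
  count P l1 = count Q l2.
Proof.
move=> u1 u2 H1 H2.
rewrite -!size_filter -(size_map f).
apply: perm_size; apply: uniq_perm.
- rewrite map_inj_in_uniq ?filter_uniq // => x y.
  rewrite !mem_filter => /andP[Px xl] /andP[Py yl] E.
  have [_ _ <-] := H1 x xl Px; have [_ _ <-] := H1 y yl Py; by rewrite E.
- by rewrite filter_uniq.
move=> y; apply/mapP/idP.
- case=> x; rewrite mem_filter => /andP[Px xl] ->.
  have [? ? _] := H1 x xl Px; by rewrite mem_filter; apply/andP.
- rewrite mem_filter => /andP[Qy yl]; have [? ? E] := H2 y yl Qy.
  by exists (g y) => //; rewrite mem_filter; apply/andP.
Qed.

Lemma count_split (T : Type) (a b : pred T) s :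
  count a s = count (fun x => a x && b x) s + count (fun x => a x && ~~ b x) s.
Proof. elim: s => //= x s ->; case: (a x) (b x) => [] []; lia. Qed.

Lemma path_geq_all a r : path geq a r -> all (fun x => x <= a) r.
Proof.
move=> H; have := order_path_min (leT := geq) _ H.
apply; move=> x y z /= ? ?; lia.
Qed.

Lemma path_geq_mono a a' r : a <= a' -> path geq a r -> path geq a' r.
Proof. case: r => //= b r Ha /andP[Hb ->]; rewrite andbT; lia. Qed.

Lemma is_partition_cons m a r :
  is_partition m (a :: r) = [&& 0 < a, all (fun x => 0 < x) r, path geq a r & sumn r + a == m].
Proof. by rewrite /is_partition /= addnC; case: (0 < a). Qed.

Definition pe (s : seq nat) : bool := all (fun x => ~~ odd x ==> (count_mem x s <= 1)) s.

Lemma count_mem0 (b : nat) r : (count_mem b r == 0) = (b \notin r).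
Proof. by apply/eqP/idP => [/count_memPn|/count_memPn]. Qed.

Lemma pe_cons a r : pe (a :: r) = (~~ odd a ==> (a \notin r)) && pe r.
Proof.
rewrite /pe /= eqxx add1n ltnS leqn0 count_mem0.
case Ha: (~~ odd a ==> (a \notin r)) => /=.
- apply: eq_in_all => x xr; case Hx: (odd x) => //=.
  case: eqP => [ax|]; last by rewrite add0n.
  by move: Ha; rewrite ax xr Hx.
- by case: (odd a) Ha => //= ->; rewrite andbF.
Qed.

Lemma all_le_notin a b r : all (fun x => x <= a) r -> a < b -> b \notin r.
Proof. move=> /allP H ab; apply/negP => /H; lia. Qed.

Lemma path_geq_notin a r : path geq a r -> a \notin r -> path geq a.-1 r.
Proof. case: r => //= b r /andP[ab ->]; rewrite inE negb_or => /andP[/eqP ? _]; rewrite andbT; lia. Qed.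

Lemma path_geq_head a b r c : path geq a (b :: r) -> a \notin b :: r -> c \in b :: r -> a.-1 <= c -> b = a.-1.
Proof.
move=> /= /andP[ab pr]; rewrite !inE negb_or => /andP[/eqP anb _] /orP[/eqP->|cr]; first lia.
have := allP (path_geq_all pr) c cr; lia.
Qed.

Lemma de3E s : de3_cond s = [&& pe s, s != [::], odd (head 0 s) & count_mem (head 0 s) s == 1].
Proof. by []. Qed.

Lemma oddS2 a : odd (a + 2) = odd a.
Proof. by rewrite addnC /= negbK. Qed.

Lemma part_nil n : 0 < n -> is_partition n [::] = false.
Proof. by case: n. Qed.

Lemma bij1 n : 0 < n ->
  count (fun s => pe s && odd (head 0 s)) (partitions n) =
  count (fun t => de3_cond t && ((head 0 t).-1 \notin t)) (partitions (n + 2)).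
Proof.
move=> n0.
apply: (count_bij (f := fun s => (head 0 s + 2) :: behead s)
                  (g := fun t => (head 0 t - 2) :: behead t)); rewrite ?uniq_partitions //.
- case=> [|a r]; rewrite mem_partitions ?part_nil //.
  rewrite is_partition_cons pe_cons /= => /and4P[a0 rpos pr /eqP sm] /andP[/andP[_ per] oa].
  have ra := path_geq_all pr.
  rewrite mem_partitions is_partition_cons rpos /=.
  split; last by rewrite addnK.
  + apply/and3P; split; [lia| |apply/eqP; lia].
    by apply: path_geq_mono pr; lia.
  + rewrite de3E pe_cons /= oddS2 oa /= per eqxx add1n eqSS count_mem0.
    rewrite (all_le_notin ra) /=; last lia.
    rewrite inE negb_or (all_le_notin ra) ?andbT; [apply/eqP; lia | lia].
- case=> [|L r]; rewrite [_ \in partitions (n + 2)]mem_partitions ?part_nil ?addn2 //.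
  rewrite is_partition_cons de3E pe_cons /= => /and4P[L0 rpos pr /eqP sm].
  move=> /andP[/and3P[pL oL]]; rewrite eqxx add1n eqSS count_mem0 inE negb_or => Lr /andP[_ L1r].
  move: pL; rewrite pe_cons => /andP[_ per].
  have pr2 : path geq (L - 2) r.
    have := path_geq_notin (path_geq_notin pr Lr) L1r.
    by have -> : L.-1.-1 = L - 2 by lia.
  have L3 : 3 <= L.
    case: r sm rpos pr2 {pr Lr L1r per} => [|d r] /=.
    + move: oL; case: L L0 => [|[|l]] //=; lia.
    + move=> _ /andP[d0 _] /andP[dL _]; move: oL; case: L L0 dL => [|[|l]] //=; lia.
  rewrite mem_partitions is_partition_cons rpos pr2 per /=.
  have oL2 : odd (L - 2) = odd L by move: L3; case: (L) => [|[|l]] //= _; rewrite subn2 /= negbK.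
  rewrite oL2 oL; split => //; [apply/andP; split; [lia|apply/eqP; lia] | congr cons; lia].
Qed.

Definition f2 (s : seq nat) := if s is a :: b :: r then a.+1 :: b.+1 :: r else s.
Definition g2 (s : seq nat) := if s is a :: b :: r then a.-1 :: b.-1 :: r else s.

Lemma bij2 n : 0 < n ->
  count (fun s => pe s && ~~ odd (head 0 s) && ((head 0 s).-1 \in s)) (partitions n) =
  count (fun t => de3_cond t && ((head 0 t).-1 \in t)) (partitions (n + 2)).
Proof.
move=> n0.
apply: (count_bij (f := f2) (g := g2)); rewrite ?uniq_partitions //.
- case=> [|a [|b r]]; rewrite [_ \in partitions n]mem_partitions ?part_nil //.
    rewrite is_partition_cons => /andP[a0 _] /andP[_]; rewrite /= inE; lia.
  rewrite is_partition_cons => /and4P[a0 rpos pr /eqP sm] /andP[/andP[pS ea] a1].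
  move: pS; rewrite pe_cons ea /= => /andP[ab pbr].
  move: a1; rewrite /= inE => /orP[/eqP ?|a1]; first lia.
  have eb := path_geq_head pr ab a1 (leqnn _); subst b.
  move: rpos pr sm pbr ab a1; rewrite /= prednK // => /andP[_ rpos] /andP[_ pr] sm.
  rewrite pe_cons => /andP[_ per] ab _.
  move: ea ab; rewrite /= inE negb_or => ea /andP[_ ar].
  have ra := path_geq_all pr.
  rewrite mem_partitions is_partition_cons /= a0 rpos de3E !pe_cons per /= ea ar eqxx /=.
  have e1 : (a == a.+1) = false by apply/eqP; lia.
  have e2 : count_mem a.+1 r = 0 by apply/count_memPn; apply: all_le_notin ra _; lia.
  rewrite e1 e2 !inE eqxx orbT /=; split => //.
  rewrite leqnSn /=; apply/andP; split; [apply: path_geq_mono (pr); lia| apply/eqP; lia].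
- case=> [|L [|c r]]; rewrite [_ \in partitions (n + 2)]mem_partitions ?part_nil ?addn2 //.
    rewrite is_partition_cons => /andP[L0 _] /andP[_]; rewrite /= inE; lia.
  rewrite is_partition_cons => /and4P[L0 rpos pr /eqP sm] /andP[/and4P[pS _ oL cL] L1].
  move: oL => /= oL; have : pe [:: L, c & r] := pS; rewrite [pe [:: L, c & r]]pe_cons => /andP[_ pcr].
  have Lcr : L \notin c :: r by rewrite -count_mem0; move: cL => /=; rewrite eqxx add1n eqSS.
  move: L1; rewrite /= inE => /orP[/eqP ?|L1]; first lia.
  have ec := path_geq_head pr Lcr L1 (leqnn _); subst c.
  have L3 : 3 <= L.
    move: rpos oL => /andP[]; case: (L) L0 => [|[|[|l]]] //.
  have oL1 : odd L.-1 = false by move: oL L0; case: (L) => //= l; case: odd.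
  have oL2 : odd L.-2 = true by move: oL L3; case: (L) => [|[|l]] //= /negbNE.
  move: pcr; rewrite [pe (L.-1 :: r)]pe_cons oL1 => /andP[L1r per]; move: L1r => /= L1r.
  move: pr rpos sm => /= /andP[_ pr] /andP[_ rpos] sm.
  have pr2 : path geq L.-2 r by apply: path_geq_notin.
  rewrite mem_partitions is_partition_cons /= !pe_cons per oL1 oL2 rpos pr2 /= !inE eqxx orbT.
  rewrite !andbT; split.
  + apply/and4P; split; [lia|lia|lia|apply/eqP; lia].
  + rewrite negb_or L1r andbT; apply/eqP; lia.
  + congr cons; [lia|congr cons; lia].
Qed.

Lemma bij3 m :
  count (fun s => pe s && ~~ odd (head 0 s) && ((head 0 s).-1 \notin s)) (partitions m.+1) =
  count de3_cond (partitions m).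
Proof.
apply: (count_bij (f := fun s => (head 0 s).-1 :: behead s)
                  (g := fun t => (head 0 t).+1 :: behead t)); rewrite ?uniq_partitions //.
- case=> [|a r]; rewrite [_ \in partitions m.+1]mem_partitions ?part_nil //.
  rewrite is_partition_cons => /and4P[a0 rpos pr /eqP sm] /andP[/andP[pS ea] a1].
  move: ea a1 => /= ea; rewrite inE negb_or => /andP[aa ar].
  move: pS; rewrite [pe (a :: r)]pe_cons ea => /andP[/= Ar per].
  have oa1 : odd a.-1 by move: ea a0; case: (a) => //= l; rewrite negbK.
  have pr1 := path_geq_notin pr Ar.
  rewrite mem_partitions is_partition_cons de3E /= pe_cons oa1 per pr1 rpos eqxx /=.
  rewrite add1n eqSS count_mem0 ar prednK //; split => //; apply/andP; split; [|apply/eqP]; lia.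
- case=> [|K r]; first by move=> _; rewrite de3E.
  rewrite [_ \in partitions m]mem_partitions.
  rewrite is_partition_cons de3E => /and4P[K0 rpos pr /eqP sm] /and4P[pS _ oK cK].
  move: oK cK => /= oK; rewrite eqxx add1n eqSS count_mem0 => Kr.
  move: pS; rewrite [pe (K :: r)]pe_cons => /andP[_ per].
  have rK := path_geq_all pr.
  rewrite mem_partitions is_partition_cons pe_cons /= per rpos oK /= inE negb_or.
  rewrite (all_le_notin rK) // Kr andbT; split => //.
  + apply/andP; split; [apply: path_geq_mono pr; lia|apply/eqP; lia].
  + by rewrite /= andbT; apply/eqP; lia.
Qed.

Lemma PE_DE3 n : 0 < n -> count pe (partitions n) = DE3 (n + 2) + DE3 (n - 1).
Proof.
move=> n0.
have E1 := bij1 n0; have E2 := bij2 n0.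
have E3 := bij3 (n - 1); rewrite (_ : (n - 1).+1 = n) in E3; last lia.
rewrite (count_split _ (fun s => odd (head 0 s))) E1.
rewrite (count_split (fun s => pe s && ~~ odd (head 0 s)) (fun s => (head 0 s).-1 \in s)) E2 E3.
rewrite /DE3 [count de3_cond (partitions (n + 2))](count_split de3_cond (fun t => (head 0 t).-1 \notin t)) addnA; congr addn.
congr addn; by apply: eq_count => t; rewrite negbK.
Qed.

Lemma all_le_pred j s : 0 < j -> all (fun x => x <= j) s && (j \notin s) = all (fun x => x <= j.-1) s.
Proof.
move=> j0; elim: s => //= x s <-; rewrite inE negb_or.
case: (ltngtP x j) => H.
- have -> : x <= j.-1 by lia.
  by case: all; case: (j \in s).
- by have -> : (x <= j.-1) = false by lia.
- rewrite H; have -> : (j <= j.-1) = false by lia.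
  by case: all.
Qed.

Lemma split_j j m (P : pred (seq nat)) : 0 < j ->
  count (fun s => all (fun x => x <= j) s && P s) (partitions m) =
  count (fun s => all (fun x => x <= j.-1) s && P s) (partitions m) +
  count (fun s => all (fun x => x <= j) s && P s && (j \in s)) (partitions m).
Proof.
move=> j0; rewrite (count_split _ (fun s => j \in s)) addnC; congr addn.
apply: eq_count => s /=; rewrite -(all_le_pred s j0).
by case: (all _ s); case: (P s); case: (j \in s).
Qed.

Lemma small_j j m (P : pred (seq nat)) : m < j ->
  count (fun s => all (fun x => x <= j) s && P s && (j \in s)) (partitions m) = 0.
Proof.
move=> mj; rewrite (eq_in_count (a2 := pred0)) ?count_pred0 // => s.
rewrite mem_partitions => /and3P[_ _ /eqP sm].
case Hj: (j \in s); last by rewrite andbF.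
have := le_sumn Hj; lia.
Qed.

Lemma cons_part j m (P Q : pred (seq nat)) : 0 < j ->
  (forall t, is_partition m t -> all (fun x => x <= j) t -> P (j :: t) = Q t) ->
  count (fun s => all (fun x => x <= j) s && P s && (j \in s)) (partitions (m + j)) =
  count (fun t => all (fun x => x <= j) t && Q t) (partitions m).
Proof.
move=> j0 HPQ.
apply: (count_bij (f := behead) (g := cons j)); rewrite ?uniq_partitions //.
- case=> [|a r]; first by move=> _ /andP[_].
  rewrite [_ \in partitions (m + j)]mem_partitions.
  rewrite is_partition_cons => /and4P[a0 rpos pr /eqP sm] /andP[/andP[/= /andP[aj rj] Ps] jin].
  have ra := path_geq_all pr.
  have aj' : a = j.
    move: jin; rewrite inE => /orP[/eqP -> //|jr]; have := allP ra j jr; lia.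
  subst a.
  have pt : is_partition m r.
    by apply/and3P; split => //; [exact: path_sorted pr | apply/eqP; lia].
  rewrite mem_partitions pt rj -HPQ //.
- move=> t; rewrite mem_partitions => pt /andP[tj Qt].
  move: (pt) => /and3P[tpos ts /eqP sm].
  rewrite mem_partitions is_partition_cons j0 tpos /= HPQ // Qt tj leqnn inE eqxx /=.
  split => //; apply/andP; split; last by apply/eqP; lia.
  case: t ts tj {pt tpos sm Qt} => //= b t -> /andP[-> _]; by [].
Qed.

Definition A m j := count (fun s => all (fun x => x <= j) s && all (fun x => ~~ (4 %| x)) s) (partitions m).
Definition E m j := count (fun s => all (fun x => x <= j) s && pe s) (partitions m).

Lemma A_small m j : 0 < j -> m < j -> A m j = A m j.-1.
Proof. by move=> j0 mj; rewrite /A (split_j _ _ j0) small_j // addn0. Qed.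

Lemma E_small m j : 0 < j -> m < j -> E m j = E m j.-1.
Proof. by move=> j0 mj; rewrite /E (split_j _ _ j0) small_j // addn0. Qed.

Lemma A_rec m j : 0 < j -> A (m + j) j = A (m + j) j.-1 + (if 4 %| j then 0 else A m j).
Proof.
move=> j0; rewrite /A (split_j _ _ j0); congr addn.
rewrite (cons_part (Q := fun t => ~~ (4 %| j) && all (fun x => ~~ (4 %| x)) t)) //.
case: (4 %| j) => /=.
- by rewrite (eq_count (a2 := pred0)) ?count_pred0 // => t; rewrite andbF.
- by [].
Qed.

Lemma E_rec_odd m j : odd j -> E (m + j) j = E (m + j) j.-1 + E m j.
Proof.
move=> oj; have j0 : 0 < j by case: j oj.
rewrite /E (split_j _ _ j0); congr addn.
by rewrite (cons_part (Q := pe)) // => t _ _; rewrite pe_cons oj.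
Qed.

Lemma E_rec_even m j : 0 < j -> ~~ odd j -> E (m + j) j = E (m + j) j.-1 + E m j.-1.
Proof.
move=> j0 ej; rewrite /E (split_j _ _ j0); congr addn.
rewrite (cons_part (Q := fun t => (j \notin t) && pe t)) //; last first.
  by move=> t _ _; rewrite pe_cons ej.
apply: eq_count => t /=; rewrite -(all_le_pred t j0).
by case: (all _ t); case: (j \in t).
Qed.

Lemma base0 m (P : pred (seq nat)) : P [::] ->
  count (fun s => all (fun x => x <= 0) s && P s) (partitions m) = (m == 0).
Proof.
move=> P0; case: m => [|m]; first by rewrite /partitions /= P0.
rewrite (eq_in_count (a2 := pred0)) ?count_pred0 // => s.
rewrite mem_partitions; case: s => [|x s] //.
by rewrite is_partition_cons /= => /andP[x0 _]; rewrite leqn0; case: x x0.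
Qed.

Lemma A0 m : A m 0 = (m == 0). Proof. exact: base0. Qed.
Lemma E0 m : E m 0 = (m == 0). Proof. exact: base0. Qed.

Lemma An n : A n n = p_no4 n.
Proof.
apply: eq_in_count => s; rewrite mem_partitions => /and3P[_ _ /eqP sm].
have -> // : all (fun x => x <= n) s by apply/allP => x xs; rewrite -sm le_sumn.
Qed.

Lemma En n : E n n = count pe (partitions n).
Proof.
apply: eq_in_count => s; rewrite mem_partitions => /and3P[_ _ /eqP sm].
have -> // : all (fun x => x <= n) s by apply/allP => x xs; rewrite -sm le_sumn.
Qed.
From mathcomp Require Import all_algebra ring.
Import GRing.Theory.

Section Poly.
Local Open Scope ring_scope.
Variable M : nat.

Definition eqm (p q : {poly int}) := forall i, (i < M)%N -> p`_i = q`_i.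

Lemma eqm_refl p : eqm p p. Proof. by []. Qed.
Lemma eqm_eq p q : p = q -> eqm p q. Proof. by move=> ->. Qed.
Lemma eqm_sym p q : eqm p q -> eqm q p. Proof. by move=> H i /H. Qed.
Lemma eqm_trans p q r : eqm p q -> eqm q r -> eqm p r.
Proof. by move=> H1 H2 i iM; rewrite H1 // H2. Qed.
Lemma eqm_mul p p' q q' : eqm p p' -> eqm q q' -> eqm (p * q) (p' * q').
Proof.
move=> H1 H2 i iM; rewrite !coefM; apply: eq_bigr => k _.
have kM : (k < M)%N by have := ltn_ord k; lia.
rewrite H1 // H2 //; lia.
Qed.

Lemma eqm_X k : (M <= k)%N -> eqm (1 - 'X^k) 1.
Proof. move=> kM i iM; rewrite coefB coefXn; have -> : (i == k) = false by apply/eqP; lia. by rewrite subr0. Qed.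

Lemma coef_1X (p : {poly int}) k i : (p * (1 - 'X^k))`_i = p`_i - (if (i < k)%N then 0 else p`_(i - k)).
Proof. by rewrite mulrBr mulr1 coefB coefMXn. Qed.

Lemma eqm_cancel p q k : (0 < k)%N -> eqm (p * (1 - 'X^k)) (q * (1 - 'X^k)) -> eqm p q.
Proof.
move=> k0 H i; elim: i {-2}i (leqnn i) => [|i IH] l li lM.
- have := H l lM; rewrite !coef_1X; have -> : (l < k)%N by lia. by rewrite !subr0.
- have := H l lM; rewrite !coef_1X; case: ifP => lk; first by rewrite !subr0.
  rewrite (IH (l - k)%N); [|lia|lia].
  by move/(congr1 (fun z => z + q`_(l - k))); rewrite !subrK.
Qed.


Definition Ap j : {poly int} := \poly_(i < M) Posz (A i j).
Definition Ep j : {poly int} := \poly_(i < M) Posz (E i j).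

Lemma Ap_step j : (0 < j)%N -> ~~ (4 %| j)%N -> eqm (Ap j * (1 - 'X^j)) (Ap j.-1).
Proof.
move=> j0 h4 i iM; rewrite coef_1X !coef_poly iM; case: ifP => ij.
- by rewrite subr0 A_small.
- have := A_rec (i - j) j0; rewrite subnK; last lia.
  rewrite (negbTE h4) => ->; have -> : (i - j < M)%N by lia.
  by rewrite PoszD addrK.
Qed.

Lemma Ap_step4 j : (0 < j)%N -> (4 %| j)%N -> eqm (Ap j) (Ap j.-1).
Proof.
move=> j0 h4 i iM; rewrite !coef_poly iM; case: (ltnP i j) => ij.
- by rewrite A_small.
- have := A_rec (i - j) j0; rewrite subnK // h4 addn0 => -> //.
Qed.

Lemma Ep_odd j : odd j -> eqm (Ep j * (1 - 'X^j)) (Ep j.-1).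
Proof.
move=> oj; have j0 : (0 < j)%N by case: j oj.
move=> i iM; rewrite coef_1X !coef_poly iM; case: ifP => ij.
- by rewrite subr0 E_small.
- have := E_rec_odd (i - j) oj; rewrite subnK; last lia.
  move=> ->; have -> : (i - j < M)%N by lia.
  by rewrite PoszD addrK.
Qed.

Lemma Ep_even j : (0 < j)%N -> ~~ odd j -> eqm (Ep j) (Ep j.-1 * (1 + 'X^j)).
Proof.
move=> j0 ej i iM; rewrite mulrDr mulr1 coefD coefMXn !coef_poly iM; case: ifP => ij.
- by rewrite addr0 E_small.
- have := E_rec_even (i - j) j0 ej; rewrite subnK; last lia.
  move=> ->; have -> : (i - j < M)%N by lia.
  by rewrite PoszD.
Qed.

Lemma Ap0 : eqm (Ap 0) 1.
Proof. move=> i iM; rewrite coef_poly iM A0 coefC; by case: i {iM}. Qed.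
Lemma Ep0 : eqm (Ep 0) 1.
Proof. move=> i iM; rewrite coef_poly iM E0 coefC; by case: i {iM}. Qed.

End Poly.

Section Main.
Local Open Scope ring_scope.

Definition Pr b : {poly int} := \prod_(i < b) (1 - 'X^(4 * i.+1)).

Lemma Pr_S b : Pr b.+1 = Pr b * (1 - 'X^(4 * b.+1)).
Proof. by rewrite /Pr big_ord_recr. Qed.

Lemma Pr0 : Pr 0 = 1.
Proof. by rewrite /Pr big_ord0. Qed.

Lemma eqm_cancelP M p q b : eqm M (p * Pr b) (q * Pr b) -> eqm M p q.
Proof.
elim: b => [|b IH]; first by rewrite Pr0 !mulr1.
rewrite Pr_S !mulrA => H; apply: IH; exact: eqm_cancel H.
Qed.

Lemma T_step n j : (0 < j)%N ->
  eqm n.+1 (Pr (minn (j %/ 2) (n %/ 4)))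
    (Pr (minn (j.-1 %/ 2) (n %/ 4)) * (if odd j then 1 else 1 - 'X^(2 * j))).
Proof.
move=> j0; case: ifP => oj.
- rewrite mulr1; have -> : minn (j %/ 2) (n %/ 4) = minn (j.-1 %/ 2) (n %/ 4) by lia.
  exact: eqm_refl.
- case: (leqP (2 * j) n) => h.
  + have -> : minn (j %/ 2) (n %/ 4) = (minn (j.-1 %/ 2) (n %/ 4)).+1 by lia.
    rewrite Pr_S; have -> : (4 * (minn (j.-1 %/ 2) (n %/ 4)).+1 = 2 * j)%N by lia.
    exact: eqm_refl.
  + have -> : minn (j %/ 2) (n %/ 4) = minn (j.-1 %/ 2) (n %/ 4) by lia.
    apply: (eqm_trans (q := Pr (minn (j.-1 %/ 2) (n %/ 4)) * 1)); first by rewrite mulr1; exact: eqm_refl.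
    apply: eqm_mul; first exact: eqm_refl.
    apply: eqm_sym; apply: eqm_X; lia.
Qed.

Lemma S_step j : (0 < j)%N ->
  Pr (j %/ 4) = Pr (j.-1 %/ 4) * (if (4 %| j)%N then 1 - 'X^j else 1).
Proof.
move=> j0; case: ifP => h.
- have -> : (j %/ 4 = (j.-1 %/ 4).+1)%N by lia.
  rewrite Pr_S; have -> : (4 * (j.-1 %/ 4).+1 = j)%N by lia. by [].
- by rewrite mulr1; have -> : (j %/ 4 = j.-1 %/ 4)%N by lia.
Qed.

End Main.

Section Inv.
Local Open Scope ring_scope.

Lemma X2 J : 'X^(2 * J) = 'X^J * 'X^J :> {poly int}.
Proof. by rewrite mul2n -addnn exprD. Qed.

Lemma inv n j : eqm n.+1 (Ap n.+1 j * Pr (minn (j %/ 2) (n %/ 4))) (Ep n.+1 j * Pr (j %/ 4)).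
Proof.
set M := n.+1.
elim: j => [|j IH].
  rewrite !div0n min0n Pr0 !mulr1; exact: (eqm_trans (Ap0 (M := M)) (eqm_sym (Ep0 (M := M)))).
have J0 : (0 < j.+1)%N by [].
have hT := T_step (n := n) J0; have hS := S_step J0; rewrite hS succnK; move: hT IH.
rewrite -/M succnK.
set TJ := Pr (minn (j.+1 %/ 2) (n %/ 4)).
set T' := Pr (minn (j %/ 2) (n %/ 4)).
set S' := Pr (j %/ 4).
move=> hT IH.
case oJ : (odd j.+1).
-
  have n4 : ~~ (4 %| j.+1)%N by apply/negP => h; move: oJ; lia.
  rewrite (negbTE n4) mulr1.
  apply: (eqm_cancel J0).
  apply: (eqm_trans (q := (Ap M j.+1 * (1 - 'X^(j.+1))) * (T' * 1))).
    rewrite mulrAC; apply: eqm_mul; [exact: eqm_refl|by rewrite oJ in hT].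
  rewrite mulr1.
  apply: (eqm_trans (q := Ap M j * T')); first by apply: eqm_mul; [exact: (Ap_step J0 n4) | exact: eqm_refl].
  apply: (eqm_trans IH).
  rewrite mulrAC; apply: eqm_mul; [|exact: eqm_refl].
  apply: eqm_sym; exact: (Ep_odd (M := M) oJ).
case h4 : (4 %| j.+1)%N.
-
  rewrite oJ in hT.
  apply: (eqm_trans (q := Ap M j * (T' * (1 - 'X^(2 * j.+1))))); first by apply: eqm_mul; [exact: (Ap_step4 (M := M) J0 h4) | exact: hT].
  rewrite mulrA.
  apply: (eqm_trans (q := Ep M j * S' * (1 - 'X^(2 * j.+1)))); first by apply: eqm_mul; [exact: IH | exact: eqm_refl].
  apply: (eqm_trans (q := (Ep M j * (1 + 'X^(j.+1))) * (S' * (1 - 'X^(j.+1))))).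
    by apply: eqm_eq; rewrite X2; ring.
  apply: eqm_mul; [apply: eqm_sym; apply: Ep_even => //; by rewrite oJ | exact: eqm_refl].
-
  rewrite oJ in hT; rewrite mulr1.
  have n4 : ~~ (4 %| j.+1)%N by rewrite h4.
  apply: (eqm_cancel J0).
  apply: (eqm_trans (q := (Ap M j.+1 * (1 - 'X^(j.+1))) * (T' * (1 - 'X^(2 * j.+1))))).
    rewrite mulrAC; apply: eqm_mul; [exact: eqm_refl|exact: hT].
  apply: (eqm_trans (q := Ap M j * T' * (1 - 'X^(2 * j.+1)))).
    rewrite mulrA; apply: eqm_mul; [|exact: eqm_refl].
    by apply: eqm_mul; [exact: (Ap_step J0 n4) | exact: eqm_refl].
  apply: (eqm_trans (q := Ep M j * S' * (1 - 'X^(2 * j.+1)))); first by apply: eqm_mul; [exact: IH | exact: eqm_refl].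
  apply: (eqm_trans (q := (Ep M j * (1 + 'X^(j.+1))) * S' * (1 - 'X^(j.+1)))).
    by apply: eqm_eq; rewrite X2; ring.
  apply: eqm_mul; [|exact: eqm_refl]; apply: eqm_mul; [|exact: eqm_refl].
  apply: eqm_sym; apply: Ep_even => //; by rewrite oJ.
Qed.

End Inv.

Lemma AE n : A n n = E n n.
Proof.
have := inv (n := n) n; have -> : minn (n %/ 2) (n %/ 4) = (n %/ 4) by lia.
move/eqm_cancelP => /(_ n (ltnSn n)); rewrite !coef_poly ltnSn; by case.
Qed.

Theorem corollary3 (n : nat) : 1 < n -> DE3 (n + 2) + DE3 (n - 1) = p_no4 n.
Proof.
move=> n1; rewrite -PE_DE3; last by lia.
by rewrite -An AE En.
Qed.
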